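(* Let $p$ be an odd prime, $G=\langle a,b : (a[b,a])^p,\ b^p\rangle$ and $H=G/\bigcap_{k\ge1}\gamma_k(G)$. Then $H$ is not isomorphic to $C_p*C_p$.
   Context: Commutator convention: $[x,y]=x^{-1}y^{-1}xy$. Lower central series: $\gamma_1(G)=G$, $\gamma_k(G)=[G,\gamma_{k-1}(G)]$. $C_p$ is the cyclic group of order $p$. *)

(* Defs.v *)
(* We develop a small theory of (possibly infinite) groups presented as
   setoids: a carrier type with an equivalence relation [geq] that the group
   operations respect.  This lets us form quotient groups and groups given
   by generators and relations without quotient types. *)
From Stdlib Require Import List Setoid Morphisms Relations.
Import ListNotations.

Record Grp := {
  gcar :> Type;
  geq : gcar -> gcar -> Prop;
  gmul : gcar -> gcar -> gcar;
  ginv : gcar -> gcar;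
  gone : gcar;
  geq_equiv : Equivalence geq;
  gmul_proper : Proper (geq ==> geq ==> geq) gmul;
  ginv_proper : Proper (geq ==> geq) ginv;
  gassoc : forall x y z, geq (gmul x (gmul y z)) (gmul (gmul x y) z);
  gone_l : forall x, geq (gmul gone x) x;
  ginv_l : forall x, geq (gmul (ginv x) x) gone }.

Arguments geq {g} _ _.
Arguments gmul {g} _ _.
Arguments ginv {g} _.
Arguments gone {g}.
#[global] Existing Instance geq_equiv.
#[global] Existing Instance gmul_proper.
#[global] Existing Instance ginv_proper.

Module GrpNotation.
Infix "==" := geq (at level 70).
Infix "*" := gmul.
End GrpNotation.
Import GrpNotation.

Section GroupLemmas.
Variable G : Grp.
Implicit Types x y z : G.

Lemma ginv_r x : x * ginv x == gone.
Proof.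
  rewrite <- (gone_l _ (x * ginv x)).
  rewrite <- (ginv_l _ (ginv x)) at 1.
  rewrite <- gassoc. rewrite (gassoc _ (ginv x) x (ginv x)).
  rewrite ginv_l, gone_l. apply ginv_l.
Qed.

Lemma gone_r x : x * gone == x.
Proof. rewrite <- (ginv_l _ x), gassoc, ginv_r. apply gone_l. Qed.

Lemma ginv_uniq x y : x * y == gone -> ginv x == y.
Proof.
  intro H. rewrite <- (gone_r (ginv x)), <- H, gassoc, ginv_l. apply gone_l.
Qed.

Lemma ginv_inv x : ginv (ginv x) == x.
Proof. apply ginv_uniq. apply ginv_l. Qed.

Lemma ginv_mul x y : ginv (x * y) == ginv y * ginv x.
Proof.
  apply ginv_uniq. rewrite gassoc, <- (gassoc _ x y), ginv_r, gone_r.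
  apply ginv_r.
Qed.

Lemma ginv_one : ginv (gone : G) == gone.
Proof. apply ginv_uniq. apply gone_l. Qed.

End GroupLemmas.

Record is_subgroup (G : Grp) (S : G -> Prop) : Prop := {
  sg_resp : forall x y, x == y -> S x -> S y;
  sg_one : S gone;
  sg_mul : forall x y, S x -> S y -> S (x * y);
  sg_inv : forall x, S x -> S (ginv x) }.

Definition conjg {G : Grp} (x g : G) : G := ginv g * x * g.

Definition is_normal (G : Grp) (N : G -> Prop) : Prop :=
  is_subgroup G N /\ forall x g, N x -> N (conjg x g).

Section Quotient.
Variables (G : Grp) (N : G -> Prop) (HN : is_normal G N).

Definition qeq (x y : G) : Prop := N (ginv x * y).

Let Hs := proj1 HN.
Let Hc := proj2 HN.

Lemma qeq_of_geq x y : x == y -> qeq x y.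
Proof.
  intro H. unfold qeq. apply (sg_resp _ _ Hs gone).
  - rewrite H. symmetry. apply ginv_l.
  - apply sg_one, Hs.
Qed.

Lemma qeq_equiv : Equivalence qeq.
Proof.
  split.
  - intro x. apply qeq_of_geq. reflexivity.
  - intros x y H. unfold qeq in *. apply (sg_resp _ _ Hs (ginv (ginv x * y))).
    + rewrite ginv_mul, ginv_inv. reflexivity.
    + apply sg_inv; auto.
  - intros x y z H1 H2. unfold qeq in *.
    apply (sg_resp _ _ Hs ((ginv x * y) * (ginv y * z))).
    + rewrite gassoc, <- (gassoc _ (ginv x)), ginv_r, gone_r. reflexivity.
    + apply sg_mul; auto.
Qed.

Lemma qmul_proper : Proper (qeq ==> qeq ==> qeq) (@gmul G).
Proof.
  intros x x' Hx y y' Hy. unfold qeq in *.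
  apply (sg_resp _ _ Hs (conjg (ginv x * x') y * (ginv y * y'))).
  - unfold conjg. rewrite ginv_mul.
    rewrite <- !gassoc. apply gmul_proper; [reflexivity|].
    rewrite !gassoc. rewrite <- (gassoc _ _ y (ginv y)), ginv_r, gone_r.
    rewrite <- !gassoc. reflexivity.
  - apply sg_mul; auto.
Qed.

Lemma qinv_proper : Proper (qeq ==> qeq) (@ginv G).
Proof.
  intros x x' Hx. unfold qeq in *.
  assert (H1 : N (ginv x' * x)).
  { apply (sg_resp _ _ Hs (ginv (ginv x * x'))).
    - rewrite ginv_mul, ginv_inv. reflexivity.
    - apply sg_inv; auto. }
  apply (sg_resp _ _ Hs (conjg (ginv x' * x) (ginv x))).
  - unfold conjg. rewrite ginv_inv. rewrite <- !gassoc.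
    rewrite ginv_r, gone_r. reflexivity.
  - apply Hc; auto.
Qed.

Definition quot : Grp := {|
  gcar := gcar G;
  geq := qeq;
  gmul := @gmul G;
  ginv := @ginv G;
  gone := @gone G;
  geq_equiv := qeq_equiv;
  gmul_proper := qmul_proper;
  ginv_proper := qinv_proper;
  gassoc := fun x y z => qeq_of_geq _ _ (gassoc G x y z);
  gone_l := fun x => qeq_of_geq _ _ (gone_l G x);
  ginv_l := fun x => qeq_of_geq _ _ (ginv_l G x) |}.

End Quotient.

Definition gen (G : Grp) (S : G -> Prop) (x : G) : Prop :=
  forall T, is_subgroup G T -> (forall y, S y -> T y) -> T x.

Definition commg {G : Grp} (x y : G) : G := ginv x * ginv y * x * y.

(* gamma_k(G) for k >= 1: gamma_1 = G, gamma_k = [G, gamma_(k-1)]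
   (the subgroup generated by the [x,y], x in G, y in gamma_(k-1)).
   [lcs0 G n] is gamma_(n+1)(G). *)
Fixpoint lcs0 (G : Grp) (n : nat) : G -> Prop :=
  match n with
  | O => fun _ => True
  | S n => gen G (fun z => exists x y, lcs0 G n y /\ z == commg x y)
  end.

Definition lcs (G : Grp) (k : nat) : G -> Prop := lcs0 G (Nat.pred k).

Definition lcs_inter (G : Grp) (x : G) : Prop := forall k, 1 <= k -> lcs G k x.

Section LCS.
Variable G : Grp.
Implicit Types x y g : G.

Lemma gen_subgroup S : is_subgroup G (gen G S).
Proof.
  split; unfold gen; intros.
  - exact (sg_resp _ _ H1 x y H (H0 T H1 H2)).
  - apply sg_one; auto.
  - apply sg_mul; [exact H1|apply H; auto|apply H0; auto].
  - apply sg_inv; [exact H0|apply H; auto].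
Qed.

Lemma conjg_mul x y g : conjg (x * y) g == conjg x g * conjg y g.
Proof.
  unfold conjg. rewrite <- !gassoc. apply gmul_proper; [reflexivity|].
  apply gmul_proper; [reflexivity|].
  rewrite (gassoc _ g (ginv g)), ginv_r, gone_l. reflexivity.
Qed.

Lemma conjg_inv x g : conjg (ginv x) g == ginv (conjg x g).
Proof.
  unfold conjg. rewrite !ginv_mul, ginv_inv, gassoc. reflexivity.
Qed.

Lemma conjg_one g : conjg gone g == gone.
Proof. unfold conjg. rewrite gone_r. apply ginv_l. Qed.

#[local] Instance conjg_proper : Proper (geq ==> geq ==> geq) (@conjg G).
Proof. intros a b H c d H'. unfold conjg. rewrite H, H'. reflexivity. Qed.

Lemma conjg_commg x y g : conjg (commg x y) g == commg (conjg x g) (conjg y g).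
Proof. unfold commg. rewrite !conjg_mul, !conjg_inv. reflexivity. Qed.

Lemma gen_conj_closed (S : G -> Prop) :
  (forall x g, S x -> S (conjg x g)) -> forall x g, gen G S x -> gen G S (conjg x g).
Proof.
  intros HS x g Hx T HT HST.
  apply (Hx (fun z => T (conjg z g))).
  - split.
    + intros a b Hab Ha. eapply sg_resp; [exact HT| |exact Ha]. rewrite Hab. reflexivity.
    + apply (sg_resp _ _ HT gone); [symmetry; apply conjg_one|apply sg_one, HT].
    + intros a b Ha Hb. apply (sg_resp _ _ HT _ _ (symmetry (conjg_mul a b g))).
      apply (sg_mul _ _ HT _ _ Ha Hb).
    + intros a Ha. apply (sg_resp _ _ HT _ _ (symmetry (conjg_inv a g))).
      apply (sg_inv _ _ HT _ Ha).
  - intros y Hy. apply HST, HS, Hy.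
Qed.

Lemma lcs0_normal n : is_normal G (lcs0 G n).
Proof.
  induction n as [|n IH]; simpl.
  - split; [split|]; auto.
  - split; [apply gen_subgroup|]. apply gen_conj_closed.
    intros z g (x & y & Hy & Hz). exists (conjg x g), (conjg y g). split.
    + apply (proj2 IH), Hy.
    + rewrite Hz. apply conjg_commg.
Qed.

Lemma lcs_inter_normal : is_normal G (lcs_inter G).
Proof.
  unfold lcs_inter, lcs.
  split; [split|].
  - intros x y H Hx k Hk. exact (sg_resp _ _ (proj1 (lcs0_normal _)) x y H (Hx k Hk)).
  - intros k _. apply sg_one, (proj1 (lcs0_normal _)).
  - intros x y Hx Hy k Hk. exact (sg_mul _ _ (proj1 (lcs0_normal _)) x y (Hx k Hk) (Hy k Hk)).
  - intros x Hx k Hk. exact (sg_inv _ _ (proj1 (lcs0_normal _)) x (Hx k Hk)).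
  - intros x g Hx k Hk. exact (proj2 (lcs0_normal _) x g (Hx k Hk)).
Qed.

End LCS.

Definition resid_quot (G : Grp) : Grp := quot G (lcs_inter G) (lcs_inter_normal G).

Record is_hom (G H : Grp) (f : G -> H) : Prop := {
  hom_proper : forall x y, x == y -> f x == f y;
  hom_mul : forall x y, f (x * y) == f x * f y }.

Definition Isomorphic (G H : Grp) : Prop :=
  exists f : G -> H, is_hom G H f /\
    (forall x y, f x == f y -> x == y) /\ (forall y, exists x, f x == y).

(* a letter is (is_inverse, generator) *)
Definition letter (X : Type) : Type := (bool * X)%type.
Definition word (X : Type) : Type := list (letter X).
Definition linv {X} (l : letter X) : letter X := (negb (fst l), snd l).
Definition winv {X} (w : word X) : word X := rev (map linv w).

Inductive pstep {X} (R : list (word X)) : word X -> word X -> Prop :=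
  | ps_cancel u v l : pstep R (u ++ l :: linv l :: v) (u ++ v)
  | ps_rel u v r : In r R -> pstep R (u ++ r ++ v) (u ++ v).

Definition peq {X} (R : list (word X)) : word X -> word X -> Prop :=
  clos_refl_sym_trans _ (pstep R).

Section Pres.
Variables (X : Type) (R : list (word X)).

Lemma peq_equiv : Equivalence (peq R).
Proof.
  split.
  - intro; apply rst_refl.
  - intros ? ?; apply rst_sym.
  - intros ? ? ?; apply rst_trans.
Qed.

Lemma pstep_ctx a b u u' : pstep R u u' -> pstep R (a ++ u ++ b) (a ++ u' ++ b).
Proof.
  intro H; destruct H.
  - replace (a ++ (u ++ l :: linv l :: v) ++ b) with ((a ++ u) ++ l :: linv l :: (v ++ b))
      by (rewrite <- !app_assoc; reflexivity).
    replace (a ++ (u ++ v) ++ b) with ((a ++ u) ++ (v ++ b))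
      by (rewrite <- !app_assoc; reflexivity).
    apply ps_cancel.
  - replace (a ++ (u ++ r ++ v) ++ b) with ((a ++ u) ++ r ++ (v ++ b))
      by (rewrite <- !app_assoc; reflexivity).
    replace (a ++ (u ++ v) ++ b) with ((a ++ u) ++ (v ++ b))
      by (rewrite <- !app_assoc; reflexivity).
    apply ps_rel; auto.
Qed.

Lemma peq_ctx a b u u' : peq R u u' -> peq R (a ++ u ++ b) (a ++ u' ++ b).
Proof.
  induction 1.
  - apply rst_step, pstep_ctx; auto.
  - apply rst_refl.
  - apply rst_sym; auto.
  - eapply rst_trans; eauto.
Qed.

Lemma papp_proper : Proper (peq R ==> peq R ==> peq R) (@app (letter X)).
Proof.
  intros u u' Hu v v' Hv. apply rst_trans with (u' ++ v).
  - pose proof (peq_ctx [] v _ _ Hu). simpl in H. exact H.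
  - pose proof (peq_ctx u' [] _ _ Hv). rewrite !app_nil_r in H. exact H.
Qed.

Lemma pcancel_r (w : word X) : peq R (w ++ winv w) [].
Proof.
  induction w as [|l w IH]; simpl.
  - apply rst_refl.
  - unfold winv; simpl. fold (winv w).
    apply rst_trans with ([l] ++ [] ++ [linv l]).
    + pose proof (peq_ctx [l] [linv l] _ _ IH). simpl in *.
      rewrite <- app_assoc in H. exact H.
    + apply rst_step. simpl. apply (ps_cancel R [] [] l).
Qed.

Lemma winv_winv (w : word X) : winv (winv w) = w.
Proof.
  unfold winv. rewrite map_rev, rev_involutive, map_map.
  rewrite <- (map_id w) at 2. apply map_ext. intros [b x]; unfold linv; simpl.
  rewrite Bool.negb_involutive. reflexivity.
Qed.

Lemma pcancel_l (w : word X) : peq R (winv w ++ w) [].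
Proof. rewrite <- (winv_winv w) at 2. apply pcancel_r. Qed.

Lemma pinv_proper : Proper (peq R ==> peq R) winv.
Proof.
  intros u u' H.
  apply rst_trans with (winv u ++ u' ++ winv u').
  - apply rst_sym. apply rst_trans with (winv u ++ []).
    + apply papp_proper; [apply rst_refl|apply pcancel_r].
    + rewrite app_nil_r. apply rst_refl.
  - apply rst_trans with (winv u ++ u ++ winv u').
    + apply papp_proper; [apply rst_refl|]. apply papp_proper; [|apply rst_refl].
      apply rst_sym; exact H.
    + rewrite app_assoc. apply rst_trans with ([] ++ winv u').
      * apply papp_proper; [apply pcancel_l|apply rst_refl].
      * apply rst_refl.
Qed.

Definition Pres : Grp := {|
  gcar := word X;
  geq := peq R;
  gmul := @app (letter X);
  ginv := winv;
  gone := [];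
  geq_equiv := peq_equiv;
  gmul_proper := papp_proper;
  ginv_proper := pinv_proper;
  gassoc := fun x y z => eq_ind_r (fun w => peq R w ((x ++ y) ++ z)) (rst_refl _ _ _) (app_assoc x y z) ;
  gone_l := fun x => rst_refl _ _ x;
  ginv_l := pcancel_l |}.

End Pres.

Definition ga : letter bool := (false, true).
Definition gai : letter bool := (true, true).
Definition gb : letter bool := (false, false).
Definition gbi : letter bool := (true, false).

Definition wpow {X} (w : word X) (n : nat) : word X := concat (repeat w n).

(* a [b,a] = a (b^-1 a^-1 b a) *)
Definition w_a_comm_ba : word bool := [ga] ++ [gbi; gai; gb; ga].

Definition Gp (p : nat) : Grp := Pres bool [wpow w_a_comm_ba p; wpow [gb] p].

Definition Hp (p : nat) : Grp := resid_quot (Gp p).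

Definition CpCp (p : nat) : Grp := Pres bool [wpow [ga] p; wpow [gb] p].

(* Main.v *)
Require Import Defs.
From mathcomp Require Import all_boot.
Set Implicit Arguments. Unset Strict Implicit. Unset Printing Implicit Defensive.

Definition syl := (bool * nat)%type.

Definition redw (p : nat) (w : seq syl) : bool :=
  all (fun s : syl => (0 < s.2 < p)) w && sorted (fun a b : syl => a.1 != b.1) w.

Definition act (p : nat) (s : syl) (w : seq syl) : seq syl :=
  let e := s.2 %% p in
  match w with
  | (c', e') :: w' => if s.1 == c' then (if (e + e') %% p == 0 then w' else (s.1, (e + e') %% p) :: w')
                      else (if e == 0 then w else (s.1, e) :: w)
  | [::] => if e == 0 then [::] else [:: (s.1, e)]
  end.

Lemma redw_cons p s w : redw p (s :: w) = [&& 0 < s.2 < p, redw p w & (if w is t :: _ then s.1 != t.1 else true)].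
Proof.
rewrite /redw /=; case: w => [|t w] /=; first by rewrite !andbT.
by rewrite -!andbA; do !bool_congr.
Qed.

Lemma act_mod p c e w : act p (c, e %% p) w = act p (c, e) w.
Proof. by rewrite /act /= modn_mod. Qed.

Lemma act0 p c e w : 0 < p -> e %% p = 0 -> redw p w -> act p (c, e) w = w.
Proof.
move=> p0 he; case: w => [|[c' e'] w] /=; rewrite /act /= he ?eqxx //.
rewrite redw_cons /= => /andP[/andP[e0 ep] _].
case: eqP => [->|_] //.
by rewrite add0n modn_small // (gtn_eqF e0).
Qed.

Lemma act_red p s w : 0 < p -> redw p w -> redw p (act p s w).
Proof.
move=> p0; case: s => c e; case: w => [|[c' e'] w] /=; rewrite /act /=.
  by case: eqP => // /eqP ne _; rewrite /redw /= andbT lt0n ne ltn_pmod.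
rewrite redw_cons /= => /and3P[/andP[e0 ep] rw hw].
have [E|ne] := eqVneq c c'.
  subst c'; case: eqP => [_|/eqP ne]; first by [].
  by rewrite redw_cons /= lt0n ne ltn_pmod // rw.
case: (e %% p =P 0) => [_|/eqP ne2]; first by rewrite redw_cons /= e0 ep rw.
by rewrite redw_cons /= lt0n ne2 ltn_pmod // redw_cons /= e0 ep rw hw ne.
Qed.

Definition hdf (w : seq syl) := (head (true, 0) w).1.
Definition lsf (w : seq syl) := (last (true, 0) w).1.

Lemma act_diff p c a w : (if w is t :: _ then c != t.1 else true) ->
  act p (c, a) w = if a %% p == 0 then w else (c, a %% p) :: w.
Proof. by case: w => [|[c' e'] w] //= ne; rewrite /act /= (negbTE ne). Qed.

Lemma m3 p x y z : (x %% p + (y %% p + z) %% p) %% p = (x + y + z) %% p.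
Proof. by rewrite modnDml modnDmr addnA -modnDml modnDmr modnDml. Qed.

Lemma actA p c a b w : 0 < p -> redw p w ->
  act p (c, a) (act p (c, b) w) = act p (c, a + b) w.
Proof.
move=> p0; case: w => [|[c' e'] w] /=.
  move=> _; rewrite /act /=; case: (b %% p =P 0) => [hb|hb].
    by rewrite -modnDmr hb addn0.
  by rewrite eqxx modnDm.
rewrite redw_cons /= => /and3P[/andP[e0 ep] rw hw].
have [E|ne] := eqVneq c c'.
  subst c'; case: (((b %% p) + e') %% p =P 0) => [h|h].
    rewrite act_diff // /act /=.
    have -> : ((a + b) %% p + e') %% p = a %% p.
      by move: h; rewrite modnDml => h; rewrite modnDml -addnA -modnDmr h addn0.
    by [].
  rewrite /act /= eqxx.
  by rewrite m3 modnDml.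
case: (b %% p =P 0) => [hb|hb].
  by rewrite act_diff //= -modnDmr hb addn0.
by rewrite /act /= eqxx modnDm.
Qed.

Definition mul p (u v : seq syl) : seq syl := foldr (act p) v u.
Definition inv p (u : seq syl) : seq syl := rev (map (fun s : syl => (s.1, p - s.2)) u).

Lemma mul_red p u v : 0 < p -> redw p v -> redw p (mul p u v).
Proof. by move=> p0 rv; elim: u => //= a u IH; apply: act_red. Qed.

Lemma act_nil p c e : act p (c, e) [::] = if e %% p == 0 then [::] else [:: (c, e %% p)].
Proof. by []. Qed.

Lemma act_same p c e e' w : act p (c, e) ((c, e') :: w) =
  if (e %% p + e') %% p == 0 then w else (c, (e %% p + e') %% p) :: w.
Proof. by rewrite /act /= eqxx. Qed.

Arguments act : simpl never.

Lemma act_mul p s w v : 0 < p -> redw p v ->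
  mul p (act p s w) v = act p s (mul p w v).
Proof.
move=> p0 rv; case: s => c e; case: w => [|[c' e'] w].
  rewrite act_nil; case: (e %% p =P 0) => [h|h] /=.
    by rewrite act0.
  by rewrite act_mod.
have [E|ne] := eqVneq c c'.
  subst c'; rewrite act_same; case: ((e %% p + e') %% p =P 0) => [h|h] /=.
    rewrite actA ?mul_red //.
    by rewrite act0 ?mul_red // -modnDml.
  rewrite actA ?mul_red //.
  by rewrite modnDml act_mod.
rewrite act_diff; last exact: ne.
rewrite [mul p (_ :: _) v]/=; case: (e %% p =P 0) => [h|h] /=.
  rewrite [act p (c, e) _]act0 //; apply: act_red => //; exact: mul_red.
by rewrite act_mod.
Qed.

Lemma mulA p u w v : 0 < p -> redw p v -> redw p w ->
  mul p (mul p u w) v = mul p u (mul p w v).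
Proof.
move=> p0 rv rw; elim: u => //= a u IH.
by rewrite act_mul ?IH // mul_red.
Qed.

Lemma mul1r p u : redw p u -> mul p u [::] = u.
Proof.
elim: u => //= a u IH; rewrite redw_cons => /and3P[/andP[a0 ap] ru hu].
rewrite IH //; case: a a0 ap hu => c e /= a0 ap hu.
rewrite act_diff; last by case: u {IH ru} hu.
by rewrite modn_small // (gtn_eqF a0).
Qed.

Lemma inv_red p u : redw p u -> redw p (inv p u).
Proof.
rewrite /redw /inv all_rev rev_sorted sorted_map all_map => /andP[ha hs].
apply/andP; split.
  apply/allP => s /(allP ha) /= /andP[s0 sp]; rewrite subn_gt0 sp /=.
  by rewrite -subn_gt0 subKn ?s0 // ltnW.
case: u hs {ha} => //= a u; apply: sub_path => x y /=; by rewrite eq_sym.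
Qed.

Lemma inv_cons p a u : inv p (a :: u) = rcons (inv p u) (a.1, p - a.2).
Proof. by rewrite /inv /= rev_cons. Qed.

Lemma mulVl p u : 0 < p -> redw p u -> mul p (inv p u) u = [::].
Proof.
move=> p0; elim: u => //= a u IH; rewrite redw_cons => /and3P[/andP[a0 ap] ru hu].
rewrite inv_cons /mul foldr_rcons -/(mul p _ _).
case: a a0 ap hu => c e /= a0 ap hu.
rewrite act_same (modn_small (m:=p - e)); last by rewrite ltn_subrL a0 (ltn_trans a0 ap).
rewrite subnK; last exact: ltnW.
rewrite modnn eqxx.
exact: IH.
Qed.

Lemma invK p u : redw p u -> inv p (inv p u) = u.
Proof.
rewrite /inv map_rev revK -map_comp /redw => /andP[ha _].
rewrite -[RHS]map_id; apply/eq_in_map => -[c e] /(allP ha) /= /andP[e0 ep].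
by rewrite subKn // ltnW.
Qed.

Lemma mulVr p u : 0 < p -> redw p u -> mul p u (inv p u) = [::].
Proof.
move=> p0 ru; rewrite -{1}(invK ru); apply: mulVl => //; exact: inv_red.
Qed.

Lemma redw_nil p : redw p [::].
Proof. by []. Qed.

Lemma redw0 u : redw 0 u -> u = [::].
Proof. by case: u => //= a u; rewrite /redw /= ltn0 andbF. Qed.

Lemma mul_red2 p u v : redw p u -> redw p v -> redw p (mul p u v).
Proof.
case: p => [|q] ru rv; first by rewrite (redw0 ru).
exact: mul_red.
Qed.

Definition W (q : nat) := {w : seq syl | redw q.+1 w}.

Definition Wm q (x y : W q) : W q :=
  exist _ (mul q.+1 (sval x) (sval y)) (mul_red2 (proj2_sig x) (proj2_sig y)).
Definition Wi q (x : W q) : W q := exist _ (inv q.+1 (sval x)) (inv_red (proj2_sig x)).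
Definition W1 q : W q := exist _ [::] (redw_nil q.+1).

Lemma Eproof q c e : redw q.+1 (act q.+1 (c, e) [::]).
Proof. exact: act_red. Qed.
Definition E q c e : W q := exist _ (act q.+1 (c, e) [::]) (Eproof q c e).

Lemma Weq q (x y : W q) : sval x = sval y -> x = y.
Proof.
case: x y => [x hx] [y hy] /= exy; subst y; congr exist; exact: eq_irrelevance.
Qed.

Lemma WmA q (x y z : W q) : Wm (Wm x y) z = Wm x (Wm y z).
Proof. case: x y z => [x hx] [y hy] [z hz]; apply: Weq; by rewrite /= mulA. Qed.
Lemma Wm1l q (x : W q) : Wm (W1 q) x = x.
Proof. by apply: Weq. Qed.
Lemma Wm1r q (x : W q) : Wm x (W1 q) = x.
Proof. case: x => [x hx]; apply: Weq; by rewrite /= mul1r. Qed.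
Lemma WmVl q (x : W q) : Wm (Wi x) x = W1 q.
Proof. case: x => [x hx]; apply: Weq; by rewrite /= mulVl. Qed.
Lemma WmVr q (x : W q) : Wm x (Wi x) = W1 q.
Proof. case: x => [x hx]; apply: Weq; by rewrite /= mulVr. Qed.

Lemma E_add q c a b : Wm (E q c a) (E q c b) = E q c (a + b).
Proof.
apply: Weq; rewrite /= act_mul //; last exact: Eproof.
by rewrite actA.
Qed.

Lemma E0 q c e : e %% q.+1 = 0 -> E q c e = W1 q.
Proof. by move=> h; apply: Weq; rewrite /= act_nil h. Qed.

Lemma WiK q (x : W q) : Wi (Wi x) = x.
Proof. case: x => [x hx]; apply: Weq; by rewrite /= invK. Qed.

Lemma WmKl q (x y : W q) : Wm (Wi x) (Wm x y) = y.
Proof. by rewrite -WmA WmVl Wm1l. Qed.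
Lemma WmKVl q (x y : W q) : Wm x (Wm (Wi x) y) = y.
Proof. by rewrite -WmA WmVr Wm1l. Qed.
Lemma WmKr q (x y : W q) : Wm (Wm y (Wi x)) x = y.
Proof. by rewrite WmA WmVl Wm1r. Qed.
Lemma WmKVr q (x y : W q) : Wm (Wm y x) (Wi x) = y.
Proof. by rewrite WmA WmVr Wm1r. Qed.

Lemma Wi_uniq q (x y : W q) : Wm x y = W1 q -> Wi x = y.
Proof. by move=> h; rewrite -[Wi x]Wm1r -h WmKl. Qed.

Lemma WiM q (x y : W q) : Wi (Wm x y) = Wm (Wi y) (Wi x).
Proof. by apply: Wi_uniq; rewrite WmA WmKVl WmVr. Qed.

Lemma Wi1 q : Wi (W1 q) = W1 q.
Proof. by apply: Wi_uniq; rewrite Wm1l. Qed.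

Lemma E_inv q c e : Wi (E q c e) = E q c (q.+1 - e %% q.+1).
Proof.
apply: Wi_uniq; rewrite E_add E0 //.
by rewrite -modnDml subnKC ?modnn // ltnW // ltn_pmod.
Qed.

Lemma E_comm q c a b : Wm (E q c a) (E q c b) = Wm (E q c b) (E q c a).
Proof. by rewrite !E_add addnC. Qed.

Fixpoint Wpow q (x : W q) n : W q := if n is n.+1 then Wm x (Wpow x n) else W1 q.

Lemma conj_pow q (g z : W q) n : Wpow (Wm (Wm (Wi g) z) g) n = Wm (Wm (Wi g) (Wpow z n)) g.
Proof.
elim: n => [|n IH] /=; first by rewrite Wm1r WmVl.
by rewrite IH !WmA WmKVl.
Qed.

Lemma conj_tors q (g z : W q) n : Wpow z n = W1 q -> Wpow (Wm (Wm (Wi g) z) g) n = W1 q.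
Proof. by move=> h; rewrite conj_pow h Wm1r WmVl. Qed.

Definition junc (u v : seq syl) := if u is [::] then true else if v is [::] then true else lsf u != hdf v.

Lemma mul_cat p u v : 0 < p -> redw p u -> redw p v -> junc u v -> mul p u v = u ++ v.
Proof.
move=> p0; elim: u => [|[c e] u IH] //= ru rv j.
move: ru; rewrite redw_cons /= => /and3P[/andP[e0 ep] ru hu].
rewrite IH //; last first.
  by case: u {IH} ru hu j => //= a u _ _; rewrite /lsf /=.
rewrite act_diff; last first.
  by case: u {IH} ru hu j => //=; case: v rv => //= b v _ _; rewrite /lsf /hdf /=.
by rewrite modn_small // (gtn_eqF e0).
Qed.

Lemma redw_cat p u v : redw p (u ++ v) = [&& redw p u, redw p v & junc u v].
Proof.
elim: u => [|a u IH] //=; first by rewrite andbT.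
rewrite !redw_cons IH; case: u IH => [|b u] IH /=.
  case: v IH => [|c v] /= IH; first by rewrite !andbT.
  by rewrite /lsf /hdf /=; do !bool_congr.
have -> : lsf [:: a, b & u] = lsf (b :: u) by [].
by case: (0 < a.2 < p); case: (redw p (b :: u)); case: (redw p v); case: (a.1 != b.1); rewrite /= ?andbT ?andbF.
Qed.

Definition good q (x : W q) a b :=
  [&& sval x != [::], hdf (sval x) == a & lsf (sval x) == b].

Lemma good_cat q (x y : W q) a b c : good x a b -> good y (~~ b) c ->
  sval (Wm x y) = sval x ++ sval y.
Proof.
case: x y => [x hx] [y hy] /and3P[/= nx hxa lxb] /and3P[/= ny hya lyc] /=.
rewrite mul_cat //; case: x nx hx hxa lxb => //= a0 x _ _ _ lxb.
case: y ny hy hya lyc => //= b0 y _ _ hb _.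
by rewrite (eqP lxb) (eqP hb); case: (b).
Qed.

Lemma good_mul q (x y : W q) a b b' c : good x a b -> good y b' c -> b' = ~~ b ->
  good (Wm x y) a c.
Proof.
move=> gx gy e; subst b'; rewrite /good (good_cat gx gy).
case: x y gx gy => [x hx] [y hy] /and3P[/= nx hxa lxb] /and3P[/= ny hya lyc] /=.
case: x nx hxa lxb {hx} => //= a0 x _ hxa lxb.
case: y ny hya lyc {hy} => //= b0 y _ hya lyc.
rewrite /hdf /lsf /= in hxa lyc *.
by rewrite hxa last_cat /=.
Qed.

Lemma good_ne1 q (x : W q) a b : good x a b -> x <> W1 q.
Proof. by case/and3P => nx _ _ ex; rewrite ex in nx. Qed.

Lemma good_pow q (z : W q) a n : good z a (~~ a) -> good (Wpow z n.+1) a (~~ a).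
Proof.
move=> gz; elim: n => [|n IH] /=; first by rewrite Wm1r.
apply: good_mul gz IH _; by rewrite negbK.
Qed.

Lemma tors_good q (z : W q) a n : good z a (~~ a) -> Wpow z n.+1 <> W1 q.
Proof. move=> gz; exact: good_ne1 (good_pow n gz). Qed.

Lemma good_E q c e : e %% q.+1 != 0 -> good (E q c e) c c.
Proof. by move=> h; rewrite /good /= act_nil (negbTE h) /hdf /lsf /= !eqxx. Qed.

Definition sz q (x : W q) := size (sval x).

Lemma E_val q c e : 0 < e < q.+1 -> sval (E q c e) = [:: (c, e)].
Proof. by case/andP=> e0 ep; rewrite /= act_nil modn_small // (gtn_eqF e0). Qed.

Lemma Enz q e : 0 < e < q.+1 -> e %% q.+1 != 0.
Proof. by case/andP=> e0 ep; rewrite modn_small // (gtn_eqF e0). Qed.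

Lemma good_sub q (x : W q) a b : good x a b ->
  good (exist _ (sval x) (proj2_sig x) : W q) a b.
Proof. by []. Qed.

Lemma dec1 q c (x : W q) :
  x = W1 q \/
  (exists i (x1 : W q), x = Wm (E q c i) x1 /\ sz x1 < sz x) \/
  (exists (x1 : W q) k, x = Wm x1 (E q c k) /\ sz x1 < sz x) \/
  good x (~~ c) (~~ c).
Proof.
case: x => [w hw]; case: w hw => [|s0 r] hw; first by left; apply: Weq.
right; have [hc|hc] := eqVneq s0.1 c.
  left; have h0 := hw; rewrite redw_cons in h0; case/and3P: h0 => rs0 rr hj.
  exists s0.2, (exist _ r rr); split; last by rewrite /sz /= ltnSn.
  apply: Weq; rewrite /= -[act _ _ [::]]/(sval (E q c s0.2)) E_val // mul_cat //.
  - by rewrite -hc; case: (s0).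
  - by rewrite /redw /= rs0.
  clear -hj hc; case: r hj => //= t r' hj; by rewrite /lsf /hdf /= -hc.
right; case/lastP: r hw => [|r sl] hw.
  by right; rewrite /good /hdf /lsf /= -(negbK (s0.1)); case: (s0.1) c hc => [] [].
have [hl|hl] := eqVneq sl.1 c.
  left; have h0 := hw; rewrite -cats1 -cat_cons redw_cat in h0; case/and3P: h0 => rr rsl hj.
  have rs : 0 < sl.2 < q.+1 by move: rsl; rewrite redw_cons => /andP[].
  exists (exist _ (s0 :: r) rr), sl.2; split; last by rewrite /sz /= size_rcons ltnSn.
  apply: Weq; rewrite -[sval (Wm _ _)]/(mul q.+1 (s0 :: r) (sval (E q c sl.2))) E_val // mul_cat //; last first.
    by move: hj; rewrite /junc /hdf /= hl.
  by rewrite /= -cats1 -hl; case: (sl).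
right; rewrite /good /hdf /lsf /= last_rcons.
by case: (s0.1) (sl.1) c hc hl => [] [] [].
Qed.

Lemma dec2 q (z : W q) a : good z a a ->
  (exists e, e %% q.+1 != 0 /\ z = E q a e) \/
  (exists e1 e2 (C : W q), [/\ e1 %% q.+1 != 0, e2 %% q.+1 != 0, good C (~~ a) (~~ a),
     z = Wm (Wm (E q a e1) C) (E q a e2) & sz C + 2 = sz z]).
Proof.
case: z => [w hw]; rewrite /good /=; case: w hw => [|s0 r] hw //= /andP[ha hl].
rewrite /hdf /= in ha; have h0 := hw; rewrite redw_cons in h0; case/and3P: h0 => rs0 rr hj.
case/lastP: r hw rr hj hl => [|m sl] hw rr hj hl.
  left; exists s0.2; split; first exact: Enz.
  by apply: Weq; rewrite E_val //= -(eqP ha); case: (s0).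
rewrite /lsf /= last_rcons in hl.
have h1 := rr; rewrite -cats1 redw_cat in h1; case/and3P: h1 => rm rsl hj2.
have rs : 0 < sl.2 < q.+1 by move: rsl; rewrite redw_cons => /andP[].
case: m hw rr hj rm hj2 => [|t m] hw rr hj rm hj2.
  by move: hj; rewrite /= (eqP ha) (eqP hl) eqxx.
right; exists s0.2, sl.2, (exist _ (t :: m) rm); split.
- exact: Enz.
- exact: Enz.
- rewrite /good /= /hdf /lsf /=; apply/andP; split.
    by move: hj; rewrite /= (eqP ha); case: (t.1) (a) => [] [].
  move: hj2; rewrite /junc /lsf /hdf /= (eqP hl).
  by case: (last t m).1 (a) => [] [].
- apply: Weq.
  have gE1 : good (E q a s0.2) a a by apply: good_E; exact: Enz.
  have gE2 : good (E q a sl.2) a a by apply: good_E; exact: Enz.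
  have gC : good (exist _ (t :: m) rm : W q) (~~ a) (~~ a).
    rewrite /good /= /hdf /lsf /=; apply/andP; split.
      by move: hj; rewrite /= (eqP ha); case: (t.1) (a) => [] [].
    move: hj2; rewrite /junc /lsf /hdf /= (eqP hl).
    by case: (last t m).1 (a) => [] [].
  have g1 := good_mul gE1 gC erefl.
  rewrite (good_cat g1 (b:=~~ a) (c:=a)); last by rewrite negbK.
  rewrite (good_cat gE1 gC) (@E_val q a _ rs0) (@E_val q a _ rs) /= -cats1.
  have e1 : s0 = (a, s0.2) by rewrite -(eqP ha); case: (s0).
  have e2 : sl = (a, sl.2) by rewrite -(eqP hl); case: (sl).
  by rewrite {1}e1 {1}e2.
by rewrite /sz /= size_rcons addn2.
Qed.

Lemma good_inv q (x : W q) a b : good x a b -> good (Wi x) b a.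
Proof.
case: x => [w hw]; rewrite /good /= /inv /hdf /lsf; clear hw.
case/and3P=> nw ha hb; apply/and3P; split.
- by rewrite -size_eq0 size_rev size_map size_eq0.
- by case/lastP: w nw ha hb => //= w' s _ _; rewrite last_rcons map_rcons rev_rcons.
- by case: w nw ha {hb} => //= s w' _; rewrite rev_cons last_rcons.
Qed.

Lemma act_size p s w : size (act p s w) <= (size w).+1.
Proof.
case: s => c e; case: w => [|[c' e'] w]; rewrite /act /=; first by case: ifP.
case: ifP => _; case: ifP => _ //=; by rewrite ltnW.
Qed.

Lemma mul_size p u v : size (mul p u v) <= size u + size v.
Proof.
elim: u => //= s u IH; apply: leq_trans (act_size _ _ _) _; by rewrite addSn ltnS.
Qed.

Lemma sz_mulE q (x : W q) c k : sz (Wm x (E q c k)) <= (sz x).+1.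
Proof.
rewrite /sz /=; apply: leq_trans (mul_size _ _ _) _.
rewrite -[(size (sval x)).+1]addn1 leq_add2l; exact: act_size.
Qed.

Lemma good_nonempty q (x : W q) : x <> W1 q -> good x (hdf (sval x)) (lsf (sval x)).
Proof.
case: x => [w hw] ne; rewrite /good /= !eqxx !andbT.
by case: w hw ne => // hw ne; case: ne; apply: Weq.
Qed.

Lemma torsD q (z : W q) : Wpow z q.+1 = W1 q ->
  exists g c i, z = Wm (Wm g (E q c i)) (Wi g).
Proof.
move: {2}(sz z).+1 (ltnSn (sz z)) => N; elim: N z => // N IH z hz tz.
have [->|ne] := eqVneq z (W1 q).
  by exists (W1 q), true, 0; rewrite E0 // Wi1 !Wm1l.
have gz := good_nonempty (elimN eqP ne).
set a := hdf (sval z) in gz; set b := lsf (sval z) in gz.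
have [eab|nab] := eqVneq b a; last first.
  have gz' : good z a (~~ a) by move: gz; case: (b) (a) nab => [] [].
  by case: (tors_good (n:=q) gz' tz).
rewrite eab in gz; case: (dec2 gz) => [[e [_ ->]]|].
  by exists (W1 q), a, e; rewrite Wi1 Wm1l Wm1r.
case=> e1 [e2 [C [h1 h2 gC dz sC]]].
set z' := Wm (Wm (Wi (E q a e1)) z) (E q a e1).
have ez' : z' = Wm C (E q a (e2 + e1)).
  by rewrite /z' dz -E_add !WmA WmKl.
have tz' : Wpow z' q.+1 = W1 q by apply: conj_tors.
have sz' : sz z' < N.
  rewrite ez'; apply: leq_ltn_trans (sz_mulE _ _ _) _.
  by move: hz; rewrite -sC addn2 ltnS.
case: (IH z' sz' tz') => g [c [i eg]].
exists (Wm (E q a e1) g), c, i.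
have -> : z = Wm (Wm (E q a e1) z') (Wi (E q a e1)).
  by rewrite /z' !WmA WmKVl WmVr Wm1r.
by rewrite eg WiM !WmA.
Qed.

Lemma dbl p e : odd p -> e %% p != 0 -> (e + e) %% p != 0.
Proof.
move=> op; rewrite -!/(dvdn p _) addnn -mul2n Gauss_dvdr //.
by rewrite coprime_sym coprime2n.
Qed.

Ltac gch := match goal with
 | |- is_true (good (Wm ?X ?Y) _ _) => eapply good_mul; [gch | gch | rewrite ?negbK; reflexivity]
 | |- _ => eassumption
 end.

Definition wK q (B r : W q) := Wm (Wm (Wm (Wm B (Wi r)) (Wi B)) r) B.

Lemma lemK q : odd q.+1 -> forall N (B rho : W q) a, sz B < N -> good B (~~ a) (~~ a) ->
  good rho a a -> Wpow (wK B rho) q.+1 <> W1 q.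
Proof.
move=> oq; elim=> // N IH B rho a hB gB gr tw.
have gri := good_inv gr.
case: (dec2 gB) => [[e [he dB]]|[e1 [e2 [C [h1 h2 gC dB sC]]]]].
  set s := E q (~~ a) e.
  have gs : good s (~~ a) (~~ a) by exact: good_E.
  have gsi := good_inv gs.
  have gss : good (E q (~~ a) (e + e)) (~~ a) (~~ a) by apply: good_E; exact: dbl.
  have tz := conj_tors s tw.
  have ez : Wm (Wm (Wi s) (wK B rho)) s = Wm (Wm (Wm (Wi rho) (Wi s)) rho) (E q (~~ a) (e + e)).
    by rewrite /wK dB -/s -E_add !WmA WmKl.
  rewrite ez in tz.
  have gz : good (Wm (Wm (Wm (Wi rho) (Wi s)) rho) (E q (~~ a) (e + e))) a (~~ a) by gch.
  exact: (tors_good gz tz).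
rewrite negbK in gC.
set s := E q (~~ a) e1; set t := E q (~~ a) e2.
have gs : good s (~~ a) (~~ a) by exact: good_E.
have gt : good t (~~ a) (~~ a) by exact: good_E.
have gsi := good_inv gs; have gti := good_inv gt; have gCi := good_inv gC.
have tz := conj_tors s tw.
case: (eqVneq ((e2 + e1) %% q.+1) 0) => hz.
  have ets : t = Wi s.
    by rewrite -[t]WiK; congr Wi; apply: Wi_uniq; rewrite /t /s E_add E0.
  set rho' := Wm (Wm (Wi s) rho) s.
  have gr' : good rho' (~~ a) (~~ a) by rewrite /rho'; gch.
  have ez : Wm (Wm (Wi s) (wK B rho)) s = wK C rho'.
    rewrite /wK dB -/s -/t ets /rho' !WiM !WiK !WmA.
    by rewrite WmKl WmVl Wm1r.
  rewrite ez in tz.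
  apply: (IH C rho' (~~ a)) => //; last by rewrite negbK.
  by move: hB; rewrite -sC addn2 ltnS; apply: ltn_trans.
have gts : good (E q (~~ a) (e2 + e1)) (~~ a) (~~ a) by exact: good_E.
set Z := Wm (Wm (Wm (Wm (Wm (Wm (Wm (Wm (Wm C t) (Wi rho)) (Wi t)) (Wi C)) (Wi s)) rho) s) C)
   (E q (~~ a) (e2 + e1)).
have ez : Wm (Wm (Wi s) (wK B rho)) s = Z.
  by rewrite /wK dB -/s -/t /Z -E_add -/s -/t !WiM !WmA WmKl.
rewrite ez in tz.
have gz : good Z a (~~ a) by rewrite /Z; gch.
exact: (tors_good gz tz).
Qed.

Definition wM q (x r t : W q) := Wm (Wm (Wm (Wm (Wm x (Wi r)) (Wi x)) r) x) t.

Lemma conjE1 q c i e (Z : W q) :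
  Wm (Wi (E q c i)) (Wm (E q c e) (Wm (E q c i) Z)) = Wm (E q c e) Z.
Proof. by rewrite -(WmA (E q c e)) E_comm WmA WmKl. Qed.

Lemma conjE2 q c i e (Z : W q) :
  Wm (E q c i) (Wm (E q c e) (Wm (Wi (E q c i)) Z)) = Wm (E q c e) Z.
Proof. by rewrite -(WmA (E q c i)) [Wm (E q c i) (E q c e)]E_comm WmA WmKVl. Qed.

Lemma lemM q c e : odd q.+1 -> e %% q.+1 != 0 -> forall N (x : W q) m, sz x < N ->
  Wpow (wM x (E q c e) (E q c m)) q.+1 = W1 q -> exists j, x = E q c j.
Proof.
move=> oq he; elim=> // N IH x m hx tw.
have gr : good (E q c e) c c by exact: good_E.
have gri := good_inv gr.
case: (dec1 c x) => [->|[[i [x1 [dx sx]]]|[[x1 [k [dx sx]]]|gx]]].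
- by exists 0; rewrite E0.
- have tz := conj_tors (E q c i) tw.
  have ez : Wm (Wm (Wi (E q c i)) (wM x (E q c e) (E q c m))) (E q c i)
            = wM x1 (E q c e) (E q c (m + i)).
    rewrite /wM dx -E_add !WiM !WmA WmKl E_inv.
    by rewrite conjE1.
  rewrite ez in tz.
  have [j ej] := IH x1 (m + i) (leq_trans sx hx) tz.
  by exists (i + j); rewrite dx ej E_add.
- have ez : wM x (E q c e) (E q c m) = wM x1 (E q c e) (E q c (k + m)).
    rewrite /wM dx -E_add !WiM !WmA E_inv.
    by rewrite conjE2.
  rewrite ez in tw.
  have [j ej] := IH x1 (k + m) (leq_trans sx hx) tw.
  by exists (j + k); rewrite dx ej E_add.
- have gxi := good_inv gx.
  case: (eqVneq (m %% q.+1) 0) => hm.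
    rewrite (@E0 q c m hm) /wM Wm1r -/(wK x (E q c e)) in tw.
    by case: (lemK oq hx gx gr tw).
  have gm : good (E q c m) c c by exact: good_E.
  have gz : good (wM x (E q c e) (E q c m)) (~~ c) c by rewrite /wM; gch.
  rewrite -[X in good _ _ X](negbK c) in gz.
  by case: (tors_good gz tw).
Qed.

Lemma mainW q : odd q.+1 -> forall x y : W q, Wpow y q.+1 = W1 q ->
  Wpow (Wm (Wm (Wm (Wm x (Wi y)) (Wi x)) y) x) q.+1 = W1 q -> Wm x y = Wm y x.
Proof.
move=> oq x y ty tw.
have [g [c [i ey]]] := torsD ty.
case: (eqVneq (i %% q.+1) 0) => hi.
  by rewrite ey (@E0 q c i hi) Wm1r WmVr Wm1r Wm1l.
set x' := Wm (Wm (Wi g) x) g.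
have ex : x = Wm (Wm g x') (Wi g) by rewrite /x' !WmA WmKVl WmVr Wm1r.
have tz := conj_tors g tw.
have ez : Wm (Wm (Wi g) (Wm (Wm (Wm (Wm x (Wi y)) (Wi x)) y) x)) g = wM x' (E q c i) (E q c 0).
  rewrite /wM (@E0 q c 0) // Wm1r ey ex.
  rewrite !WiM !WiK !WmA ?(WmKl, WmKVl, WmVl, WmVr, Wm1r).
  by rewrite /x' ?WmA.
rewrite ez in tz.
have [j ej] := lemM oq hi (ltnSn (sz x')) tz.
rewrite ex ey ej !WmA WmKl.
by rewrite WmKl -[Wm (E q c j) (Wm (E q c i) _)]WmA E_comm WmA.
Qed.

Definition phil q (l : letter bool) : W q := E q l.2 (if l.1 then q else 1).
Definition phi q (w : word bool) : W q := foldr (fun l acc => Wm (phil q l) acc) (W1 q) w.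

Lemma phi_app q (u v : word bool) : phi q (app u v) = Wm (phi q u) (phi q v).
Proof. elim: u => [|l u IH] /=; first by rewrite Wm1l. by rewrite IH WmA. Qed.

Lemma phi_wpow1 q l n : phi q (wpow (l :: nil) n) = E q l.2 (n * (if l.1 then q else 1)).
Proof.
elim: n => [|n IH]; first by rewrite (@E0 q _ 0).
rewrite /wpow /= -/(wpow _ _) IH /phil E_add; congr E; by rewrite mulSn.
Qed.

Lemma phil_cancel q l : Wm (phil q l) (phil q (linv l)) = W1 q.
Proof.
case: l => [b c]; rewrite /phil /linv /= E_add E0 //.
by case: b => /=; rewrite ?add1n ?addn1 modnn.
Qed.

Lemma phi_peq q (u v : word bool) :
  peq (wpow (ga :: nil) q.+1 :: wpow (gb :: nil) q.+1 :: nil) u v -> phi q u = phi q v.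
Proof.
elim=> {u v} [u v st|u|u v _ IH|u v w _ IH1 _ IH2] //; try by rewrite ?IH ?IH1.
case: st => [u' v' l|u' v' r hr].
  by rewrite !phi_app /= -[Wm (phil q l) _]WmA phil_cancel Wm1l.
rewrite !phi_app; suff -> : phi q r = W1 q by rewrite Wm1l.
case: hr => [<-|[<-|[]]]; rewrite phi_wpow1 E0 // modnMr;
  by [].
Qed.

Lemma cmV q (a b : W q) : Wm a b = Wm b a -> Wm a (Wi b) = Wm (Wi b) a.
Proof.
move=> h; transitivity (Wm (Wi b) (Wm (Wm b a) (Wi b))); first by rewrite WmA WmKl.
by rewrite -h WmKVr.
Qed.

Lemma cmM q (a b c : W q) : Wm a b = Wm b a -> Wm a c = Wm c a -> Wm a (Wm b c) = Wm (Wm b c) a.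
Proof. by move=> h1 h2; rewrite -WmA h1 !WmA h2. Qed.

Lemma E1ne q : 0 < q -> Wm (E q true 1) (E q false 1) <> Wm (E q false 1) (E q true 1).
Proof.
move=> q0 h.
have n1 : 1 %% q.+1 != 0 by rewrite modn_small.
have g1 := good_mul (good_E true n1) (good_E false n1) erefl.
have g2 := good_mul (good_E false n1) (good_E true n1) erefl.
rewrite h in g1; case/and3P: g1 => _ /eqP h1 _; case/and3P: g2 => _ /eqP h2 _.
by rewrite h1 in h2.
Qed.

Unset Implicit Arguments.
Set Strict Implicit.

Theorem mainTheorem15 (p : nat) (hp : prime p) (hodd : odd p) :
  ~ Isomorphic (Hp p) (CpCp p).
Proof.
case: p hp hodd => [//|q] hp hodd.
have q0 : 0 < q by have := prime_gt1 hp.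
case=> f [hf [_ fsurj]].
pose F := fun h : word bool => phi q (f h).
have Fp : forall u v, @Defs.geq (Hp q.+1) u v -> F u = F v.
  by move=> u v h; apply: phi_peq; exact: (hom_proper _ _ _ hf _ _ h).
have Fm : forall u v, F (app u v) = Wm (F u) (F v).
  move=> u v; rewrite /F -phi_app; apply: phi_peq; exact: (hom_mul _ _ _ hf u v).
have F1 : F nil = W1 q.
  have h := Fm nil nil; rewrite /= in h.
  by rewrite -{1}(WmKl (F nil) (F nil)) -h WmVl.
have Fg : forall u v, peq (wpow w_a_comm_ba q.+1 :: wpow (gb :: nil) q.+1 :: nil) u v -> F u = F v.
  move=> u v h; apply: Fp.
  exact: (qeq_of_geq (Gp q.+1) (lcs_inter (Gp q.+1)) (lcs_inter_normal (Gp q.+1)) u v h).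
have Fc : forall l h, F (l :: h) = Wm (F (l :: nil)) (F h) by move=> l h; rewrite -Fm.
have Fw : forall w n, F (wpow w n) = Wpow (F w) n.
  move=> w; elim=> [|n IH] /=; first exact: F1.
  by rewrite -IH -Fm.
set x := F (ga :: nil); set y := F (gb :: nil).
have xi : F (gai :: nil) = Wi x.
  rewrite -[F _]WiK; congr Wi; apply: Wi_uniq; rewrite /x -Fc -F1; apply: Fg.
  exact: (Relation_Operators.rst_step _ _ _ _ (ps_cancel _ nil nil gai)).
have yi : F (gbi :: nil) = Wi y.
  rewrite -[F _]WiK; congr Wi; apply: Wi_uniq; rewrite /y -Fc -F1; apply: Fg.
  exact: (Relation_Operators.rst_step _ _ _ _ (ps_cancel _ nil nil gbi)).
have rel : forall r, List.In r (wpow w_a_comm_ba q.+1 :: wpow (gb :: nil) q.+1 :: nil) -> F r = W1 q.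
  move=> r hr; rewrite -F1 -[r]List.app_nil_r; apply: Fg.
  exact: (Relation_Operators.rst_step _ _ _ _ (ps_rel _ nil nil r hr)).
have ty : Wpow y q.+1 = W1 q by rewrite -Fw; apply: rel; right; left.
have tw : Wpow (Wm (Wm (Wm (Wm x (Wi y)) (Wi x)) y) x) q.+1 = W1 q.
  rewrite -(rel (wpow w_a_comm_ba q.+1)); last by left.
  by rewrite Fw /w_a_comm_ba /= ![F (_ :: _ :: _)]Fc -/x -/y xi yi !WmA.
have cxy := mainW hodd ty tw.
have cl : forall a, Wm a x = Wm x a -> Wm a y = Wm y a -> forall h, Wm a (F h) = Wm (F h) a.
  move=> a ax ay; elim=> [|l h IH]; first by rewrite F1 Wm1l Wm1r.
  rewrite Fc; apply: cmM => //.
  case: l => [[] []]; rewrite -/x -/y.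
  - by rewrite -/gai xi; apply: cmV; exact: ax.
  - by rewrite -/gbi yi; apply: cmV; exact: ay.
  - exact: ax.
  - exact: ay.
have cF : forall h1 h2, Wm (F h1) (F h2) = Wm (F h2) (F h1).
  move=> h1; apply: (cl); symmetry; apply: (cl) => //; exact: esym.
have [h1 e1] := fsurj (ga :: nil).
have [h2 e2] := fsurj (gb :: nil).
have E1 : F h1 = E q true 1 by rewrite /F (phi_peq e1) /= Wm1r.
have E2 : F h2 = E q false 1 by rewrite /F (phi_peq e2) /= Wm1r.
by apply: (E1ne q0); rewrite -E1 -E2 cF.
Qed.
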